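(* Let $0<\kappa_0\le1$, $0<\alpha_0\le1$, $T\ge8$, $M=4T\kappa_0^{-1}$, $\Lambda\subset\mathfrak T$, and let $w,D$ be as in the context with $D\in\mathcal G_{\Lambda,T,\kappa_0}$. If $\gamma=(n_1,\dots,n_k)\in\Gamma_{D,T,\kappa_0}(n_1,n_k;k,\Lambda,\mathfrak R)$, then $$W_{D,\kappa_0}(\gamma)\le\exp\big(kM^2-\kappa_0(1-2^{-9})\|\gamma\|+2\bar D(\gamma)\big).$$
   Context: $(\mathfrak T,+)$ is an Abelian group with $|\cdot|:\mathfrak T\to[0,\infty)$, $|m|=0$ iff $m=0$, $|m+n|\le|m|+|n|$. Fix $\Lambda\subset\mathfrak T$ and functions $w:\Lambda\times\Lambda\to[0,\infty)$, $D:\Lambda\to[1,\infty)$ with $w(m,m)=1$ and $w(m,n)\le\exp(-\kappa_0|m-n|^{\alpha_0})$. A trajectory is a finite sequence $\gamma=(n_1,\dots,n_k)$ of points of $\Lambda$, $k\ge1$, with $n_{j+1}\ne n_j$. Put $\|\gamma\|=\sum_{i=1}^{k-1}|n_i-n_{i+1}|^{\alpha_0}$ ($=0$ if $k=1$), $\bar D(\gamma)=\max_jD(n_j)$, $W_{D,\kappa_0}(\gamma)=\exp(-\kappa_0\|\gamma\|+\sum_{j=1}^kD(n_j))$. Let $\mu_\Lambda(m)=\inf\{|m-n|:n\in\mathfrak T\setminus\Lambda\}$. $D\in\mathcal G_{\Lambda,T,\kappa_0}$ means: $D(m)\le T\mu_\Lambda(m)^{\alpha_0/5}$ for every $m$ with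 $D(m)\ge4T\kappa_0^{-1}$. For $D\in\mathcal G_{\Lambda,T,\kappa_0}$, $\Gamma_{D,T,\kappa_0}(n_1,n_k;k,\Lambda,\mathfrak R)$ is the set of trajectories $\gamma=(n_1,\dots,n_k)$ such that: (A) for all $i<j$ with $j\ge i+2$ and $\min(D(n_i),D(n_j))\ge4T\kappa_0^{-1}$ one has $\min(D(n_i),D(n_j))\le T\|(n_i,\dots,n_j)\|^{\alpha_0/5}$; and (B) if for some $i$ one has $\min(D(n_i),D(n_{i+1}))\ge4T\kappa_0^{-1}$ and $\min(D(n_i),D(n_{i+1}))>T|n_i-n_{i+1}|^{\alpha_0/5}$, then for all $j'<i<i+1<j''$: $\min(D(n_{j'}),D(n_i))\le T\|(n_{j'},\dots,n_i)\|^{\alpha_0/5}$, $\min(D(n_i),D(n_{j''}))\le T\|(n_i,\dots,n_{j''})\|^{\alpha_0/5}$, $\min(D(n_{j'}),D(n_{i+1}))\le T\|(n_{j'},\dots,n_{i+1})\|^{\alpha_0/5}$, $\min(D(n_{i+1}),D(n_{j''}))\le T\|(n_{i+1},\dots,n_{j''})\|^{\alpha_0/5}$. *)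

(* Defs.v *)
From Stdlib Require Import Reals List.
Import ListNotations.
Open Scope R_scope.

(* Real power x^y for x >= 0, y > 0, with the convention 0^y = 0
   (Stdlib's Rpower 0 y is exp(y * ln 0) = 1, which is wrong here). *)
Definition rpow (x y : R) : R := if Req_EM_T x 0 then 0 else Rpower x y.

(* Infimum of a set of reals (used for mu_Lambda). If the set is empty,
   no real is its infimum (mu = +infinity). *)
Definition is_inf (S : R -> Prop) (r : R) : Prop :=
  (forall x, S x -> r <= x) /\ (forall b, (forall x, S x -> b <= x) -> b <= r).

Section Traj.
Variable G : Type.
Variable dist : G -> G -> R.   (* dist m n = |m - n| *)
Variable alpha0 : R.
Variable D : G -> R.

Fixpoint path_norm (l : list G) : R :=
  match l with
  | x :: ((y :: _) as l') => rpow (dist x y) alpha0 + path_norm l'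
  | _ => 0
  end.

(* ||(n_i, ..., n_j)|| with 0-based indices i <= j *)
Definition seg_norm (l : list G) (i j : nat) : R :=
  path_norm (firstn (S (j - i)) (skipn i l)).

Definition sumD (l : list G) : R := fold_right (fun x acc => D x + acc) 0 l.

Definition Dbar (l : list G) : R :=
  match l with
  | [] => 0
  | x :: l' => fold_right (fun y acc => Rmax (D y) acc) (D x) l'
  end.

Fixpoint consec_distinct (l : list G) : Prop :=
  match l with
  | x :: ((y :: _) as l') => x <> y /\ consec_distinct l'
  | _ => True
  end.
End Traj.

Arguments path_norm {G} dist alpha0 l.
Arguments seg_norm {G} dist alpha0 l i j.
Arguments sumD {G} D l.
Arguments Dbar {G} D l.
Arguments consec_distinct {G} l.

Definition Wgt {G : Type} (dist : G -> G -> R) (alpha0 kappa0 : R) (D : G -> R)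
  (l : list G) : R :=
  exp (- kappa0 * path_norm dist alpha0 l + sumD D l).

Definition in_GG {G : Type} (dist : G -> G -> R) (alpha0 : R)
  (Lambda : G -> Prop) (T kappa0 : R) (D : G -> R) : Prop :=
  forall m, Lambda m -> D m >= 4 * T / kappa0 ->
    forall mu, is_inf (fun r => exists n, ~ Lambda n /\ r = dist m n) mu ->
      D m <= T * rpow mu (alpha0 / 5).

(* gamma = (n_1,...,n_k) in Gamma_{D,T,kappa0}(n_1,n_k;k,Lambda,R).
   Points are indexed 0..k-1 (0-based); n1 is the first point, nk the last. *)
Definition in_Gamma {G : Type} (dist : G -> G -> R) (alpha0 : R)
  (Lambda : G -> Prop) (T kappa0 : R) (D : G -> R)
  (n1 nk : G) (k : nat) (l : list G) : Prop :=
  let M := 4 * T / kappa0 in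
  let n := fun i => nth i l n1 in
  let mD := fun i j => Rmin (D (n i)) (D (n j)) in
  let snorm := seg_norm dist alpha0 l in
  (1 <= k)%nat /\ length l = k /\ n O = n1 /\ n (Nat.pred k) = nk /\
  Forall Lambda l /\ consec_distinct l /\
  (* (A) *)
  (forall i j, (j < k)%nat -> (i + 2 <= j)%nat -> mD i j >= M ->
     mD i j <= T * rpow (snorm i j) (alpha0 / 5)) /\
  (* (B) *)
  (forall i, (i + 1 < k)%nat ->
     mD i (S i) >= M -> mD i (S i) > T * rpow (dist (n i) (n (S i))) (alpha0 / 5) ->
     forall j' j'', (j' < i)%nat -> (S i < j'')%nat -> (j'' < k)%nat ->
       mD j' i <= T * rpow (snorm j' i) (alpha0 / 5) /\
       mD i j'' <= T * rpow (snorm i j'') (alpha0 / 5) /\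
       mD j' (S i) <= T * rpow (snorm j' (S i)) (alpha0 / 5) /\
       mD (S i) j'' <= T * rpow (snorm (S i) j'') (alpha0 / 5)).

(* Main.v *)
Require Import Defs.
From Stdlib Require Import Reals List Lia Lra ZArith.
Import ListNotations.
Open Scope R_scope.

Lemma exp_le' x y : x <= y -> exp x <= exp y.
Proof. intro H; destruct (Rle_lt_or_eq_dec _ _ H) as [h|h]; [left; apply exp_increasing; auto| subst; lra]. Qed.

Lemma rpow_nonneg x y : 0 <= rpow x y.
Proof. unfold rpow; destruct Req_EM_T; [lra| unfold Rpower; left; apply exp_pos]. Qed.

Lemma exp_pow5 x : exp x ^ 5 = exp (5 * x).
Proof. replace (5*x) with (x+(x+(x+(x+x)))) by ring; rewrite !exp_plus; simpl; ring. Qed.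

Lemma rpow_big (s c a : R) : 1 <= c -> 0 < a <= 1 -> c < rpow s (a/5) -> c^5 <= s.
Proof.
  intros Hc Ha. unfold rpow. destruct (Req_EM_T s 0) as [->|Hs]; [lra|]. unfold Rpower. intro H.
  assert (H1 : 0 < a/5 * ln s).
  { destruct (Rle_lt_dec (a/5 * ln s) 0) as [h|h]; [|auto].
    pose proof (exp_le' _ _ h). rewrite exp_0 in H0. lra. }
  assert (Hl : 0 < ln s) by nra.
  assert (Hs0 : 0 < s).
  { unfold ln in Hl. destruct (Rlt_dec 0 s); [auto|lra]. }
  assert (H2 : exp (a/5*ln s) <= exp (ln s / 5)) by (apply exp_le'; nra).
  assert (H3 : c^5 <= exp (ln s / 5) ^ 5) by (apply pow_incr; lra).
  rewrite exp_pow5 in H3. replace (5 * (ln s / 5)) with (ln s) in H3 by field.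
  rewrite exp_ln in H3; auto.
Qed.

Lemma pn_nonneg {G} (dist : G -> G -> R) a l : 0 <= path_norm dist a l.
Proof.
  induction l as [|x l IH]; simpl; [lra|]. destruct l; [lra|].
  pose proof (rpow_nonneg (dist x g) a); lra.
Qed.

Lemma pn_cons_ge {G} (dist : G -> G -> R) a x l : path_norm dist a l <= path_norm dist a (x :: l).
Proof. destruct l; simpl; [lra|]. pose proof (rpow_nonneg (dist x g) a); lra. Qed.

Lemma pn_app {G} (dist : G -> G -> R) a (l1 : list G) z l2 :
  path_norm dist a (l1 ++ z :: l2) = path_norm dist a (l1 ++ [z]) + path_norm dist a (z :: l2).
Proof.
  induction l1 as [|x l1 IH]; simpl; [lra|].
  destruct l1 as [|y l1]; simpl; [lra|]. simpl in IH. rewrite IH. ring.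
Qed.

Lemma firstn_mid {A} (l1 : list A) z l2 : firstn (S (length l1)) (l1 ++ z :: l2) = l1 ++ [z].
Proof. induction l1; simpl; auto. f_equal. auto. Qed.

Lemma skipn_mid {A} (l1 l2 : list A) : skipn (length l1) (l1 ++ l2) = l2.
Proof. induction l1; simpl; auto. Qed.

Lemma nth_mid {A} (l1 : list A) z l2 d : nth (length l1) (l1 ++ z :: l2) d = z.
Proof. induction l1; simpl; auto. Qed.

Lemma seg_shift {G} (dist : G -> G -> R) al l a i j :
  seg_norm dist al l (a+i) (a+j) = seg_norm dist al (skipn a l) i j.
Proof.
  unfold seg_norm. replace (a+j-(a+i))%nat with (j-i)%nat by lia.
  rewrite skipn_skipn. rewrite (Nat.add_comm i a). auto.
Qed.

Definition cntg {G} (D : G -> R) (mu : R) (l : list G) : nat :=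
  fold_right (fun x acc => if Rlt_dec mu (D x) then S acc else acc) O l.

Lemma cnt_cons_le {G} (D : G -> R) mu x l : (cntg D mu (x :: l) <= S (cntg D mu l))%nat.
Proof. simpl. destruct Rlt_dec; lia. Qed.

Lemma cnt_cons_small {G} (D : G -> R) mu x l : D x <= mu -> cntg D mu (x :: l) = cntg D mu l.
Proof. intro h. simpl. destruct Rlt_dec; [lra|auto]. Qed.

Lemma cnt_app_small {G} (D : G -> R) mu pre r :
  Forall (fun w => D w <= mu) pre -> cntg D mu (pre ++ r) = cntg D mu r.
Proof.
  induction 1; simpl; auto. destruct Rlt_dec; [lra|auto].
Qed.

Lemma first_split {G} (D : G -> R) mu (l : list G) :
  Forall (fun w => D w <= mu) l \/
  exists pre z post, l = pre ++ z :: post /\ Forall (fun w => D w <= mu) pre /\ mu < D z.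
Proof.
  induction l as [|x l IH]; [left; constructor|].
  destruct (Rlt_dec mu (D x)) as [h|h].
  - right. exists [], x, l. repeat split; auto.
  - destruct IH as [IH|(pre&z&post&E&F&Hz)].
    + left. constructor; auto. lra.
    + right. exists (x :: pre), z, post. subst. repeat split; auto. constructor; auto; lra.
Qed.

Lemma count_bound {G} (dist : G -> G -> R) al (D : G -> R) mu P (d : G) : 0 < P ->
  forall n l, (length l <= n)%nat ->
  (forall i j, (j < length l)%nat -> (i + 2 <= j)%nat -> mu < D (nth i l d) -> mu < D (nth j l d) ->
     P <= seg_norm dist al l i j) ->
  INR (cntg D mu l) <= 2 + 2 * path_norm dist al l / P.
Proof.
  intros HP. assert (Hq : 0 < / P) by (apply Rinv_0_lt_compat; auto).
  assert (HPq : P * / P = 1) by (field; lra).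
  induction n as [|n IHn]; intros l Hlen H.
  - destruct l; simpl in Hlen; [|lia]. simpl. pose proof (pn_nonneg dist al []). unfold Rdiv. nra.
  - destruct l as [|x l']. { simpl. unfold Rdiv. nra. }
    destruct (Rle_lt_dec (D x) mu) as [hx|hx].
    + rewrite cnt_cons_small; auto.
      assert (IH := IHn l' ltac:(simpl in Hlen; lia)
        ltac:(intros i j Hj Hij Hi Hj'; apply (H (S i) (S j)); simpl; auto; lia)).
      pose proof (pn_cons_ge dist al x l'). unfold Rdiv in *. nra.
    + destruct l' as [|y l''].
      { simpl. destruct Rlt_dec; [|lra]. simpl. pose proof (pn_nonneg dist al [x]). unfold Rdiv. nra. }
      destruct (first_split D mu l'') as [F|(pre&z&post&E&F&Hz)].
      * assert (cntg D mu (x :: y :: l'') <= 2)%nat.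
        { eapply Nat.le_trans; [apply cnt_cons_le|].
          eapply le_n_S, Nat.le_trans; [apply cnt_cons_le|].
          rewrite <- (app_nil_r l''), cnt_app_small; simpl; auto. }
        apply le_INR in H0. replace (INR 2) with 2 in H0 by (simpl; lra).
        pose proof (pn_nonneg dist al (x :: y :: l'')).
        assert (0 <= path_norm dist al (x :: y :: l'') * / P) by (apply Rmult_le_pos; lra).
        unfold Rdiv. lra.
      * subst l''.
        set (A := x :: y :: pre).
        assert (HL : x :: y :: pre ++ z :: post = A ++ z :: post) by reflexivity.
        rewrite HL in *.
        assert (Hc : (cntg D mu (A ++ z :: post) <= 2 + cntg D mu (z :: post))%nat).
        { unfold A. simpl app.
          eapply Nat.le_trans; [apply cnt_cons_le|].
          eapply le_n_S, Nat.le_trans; [apply cnt_cons_le|].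
          rewrite cnt_app_small; auto. }
        assert (Hseg : P <= path_norm dist al (A ++ [z])).
        { specialize (H 0%nat (length A)).
          unfold seg_norm in H. rewrite Nat.sub_0_r, skipn_O, firstn_mid in H.
          apply H.
          - rewrite length_app. simpl. lia.
          - unfold A; simpl; lia.
          - unfold A; simpl; auto.
          - rewrite nth_mid; auto. }
        assert (IH := IHn (z :: post) ltac:(rewrite length_app in Hlen; simpl in Hlen |- *; unfold A in Hlen; simpl in Hlen; lia)).
        assert (IH' : INR (cntg D mu (z :: post)) <= 2 + 2 * path_norm dist al (z :: post) / P).
        { apply IH. intros i j Hj Hij Hi Hj'.
          rewrite <- (skipn_mid A (z :: post)). rewrite <- seg_shift.
          apply H.
          - rewrite length_app. lia.
          - lia.
          - rewrite <- nth_skipn, skipn_mid. auto.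
          - rewrite <- nth_skipn, skipn_mid. auto. }
        rewrite pn_app.
        apply le_INR in Hc. rewrite plus_INR in Hc. replace (INR 2) with 2 in Hc by (simpl; lra).
        assert (0 <= (path_norm dist al (A ++ [z]) - P) * / P) by (apply Rmult_le_pos; lra).
        unfold Rdiv in *. nra.
Qed.

Definition Gm {G} (D : G -> R) lam (l : list G) : R :=
  fold_right (fun x acc => Rmin (D x) lam + acc) 0 l.

Lemma Gm_half {G} (D : G -> R) lam l : 0 <= lam ->
  Gm D lam l <= Gm D (lam/2) l + lam/2 * INR (cntg D (lam/2) l).
Proof.
  intro h. induction l as [|x l IH]; simpl; [lra|].
  destruct Rlt_dec as [r|r]; [rewrite S_INR|]; unfold Rmin; destruct Rle_dec; destruct Rle_dec; nra.
Qed.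

Lemma Gm_le {G} (D : G -> R) lam l : Gm D lam l <= INR (length l) * lam.
Proof.
  induction l as [|x l IH]; simpl length; [simpl; lra|]. rewrite S_INR. simpl.
  pose proof (Rmin_r (D x) lam). lra.
Qed.

Lemma inv_base {G} (D : G -> R) (l : list G) (pn T M E : R) : 0 <= pn -> 0 < T -> 2 <= M ->
  48*T^5 <= E * M^8 -> forall lam, M^2/2 <= lam <= M^2 ->
  Gm D lam l <= INR (length l) * M^2 + 2*lam + pn*(E - 3*T^5/lam^4).
Proof.
  intros Hpn HT HM HE lam [h1 h2].
  assert (HM8 : 0 < M^8) by (apply pow_lt; lra).
  assert (HT5 : 0 < T^5) by (apply pow_lt; lra).
  assert (HEp : 0 < E) by nra.
  assert (Hl : 0 < lam) by nra.
  assert (Hl4 : 0 < lam^4) by (apply pow_lt; lra).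
  assert (Hp : (M^2/2)^4 <= lam^4) by (apply pow_incr; split; nra).
  replace ((M^2/2)^4) with (M^8/16) in Hp by field.
  assert (H3 : 3*T^5 <= E*lam^4) by nra.
  assert (H4 : 3*T^5/lam^4 <= E).
  { apply (Rmult_le_reg_r (lam^4)); auto. field_simplify; lra. }
  pose proof (Gm_le D lam l). pose proof (pos_INR (length l)).
  assert (INR (length l) * lam <= INR (length l) * M^2) by (apply Rmult_le_compat_l; lra).
  assert (0 <= pn*(E - 3*T^5/lam^4)) by (apply Rmult_le_pos; lra).
  lra.
Qed.

Lemma inv {G} (D : G -> R) (l : list G) (pn T M E : R) : 0 <= pn -> 0 < T -> 2 <= M ->
  48*T^5 <= E * M^8 ->
  (forall mu, M <= mu -> INR (cntg D mu l) <= 2 + 2*pn/((mu/T)^5)) ->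
  forall L lam, M^2/2 <= lam <= M^2 * 2^L ->
  Gm D lam l <= INR (length l) * M^2 + 2*lam + pn*(E - 3*T^5/lam^4).
Proof.
  intros Hpn HT HM HE Hc L. induction L as [|L IH]; intros lam [h1 h2].
  - apply inv_base; auto. split; lra.
  - destruct (Rle_lt_dec lam (M^2)) as [h|h]. { apply inv_base; auto. }
    assert (Hl : 0 < lam) by nra.
    assert (IH' := IH (lam/2) ltac:(simpl in h2; split; lra)).
    assert (Hcnt := Hc (lam/2) ltac:(nra)).
    assert (Hh := Gm_half D lam l ltac:(lra)).
    set (w := T^5/lam^4).
    assert (Hw : 0 <= w) by (unfold w; apply Rle_mult_inv_pos; [apply pow_le; lra| apply pow_lt; lra]).
    assert (E1 : 3*T^5/(lam/2)^4 = 48*w) by (unfold w; field; lra).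
    assert (E2 : lam/2 * (2 + 2*pn/((lam/2/T)^5)) = lam + 32*pn*w) by (unfold w; field; lra).
    assert (E3 : 3*T^5/lam^4 = 3*w) by (unfold w; field; lra).
    rewrite E1 in IH'. rewrite E3.
    assert (lam/2 * INR (cntg D (lam/2) l) <= lam/2 * (2 + 2*pn/((lam/2/T)^5)))
      by (apply Rmult_le_compat_l; lra).
    rewrite E2 in H.
    assert (0 <= pn * w) by (apply Rmult_le_pos; lra).
    nra.
Qed.

Lemma Dbar_ge {G} (D : G -> R) l y : In y l -> D y <= Dbar D l.
Proof.
  destruct l as [|x l']; [intros []|]. simpl.
  assert (forall b, b <= fold_right (fun y acc => Rmax (D y) acc) b l' /\
    forall y, In y l' -> D y <= fold_right (fun y acc => Rmax (D y) acc) b l').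
  { intro b. induction l' as [|z l' IH]; simpl; [split; [lra| intros _ []]|].
    destruct IH as [I1 I2]. split.
    - eapply Rle_trans; [apply I1| apply Rmax_r].
    - intros y0 [<-|Hy]; [apply Rmax_l|]. eapply Rle_trans; [apply I2; auto| apply Rmax_r]. }
  intros Hy. simpl in Hy. destruct Hy as [<-|Hy]; [apply (proj1 (H (D x))) | apply (proj2 (H (D x))); auto].
Qed.

Lemma sumD_len {G} (D : G -> R) l b : (forall y, In y l -> D y <= b) -> sumD D l <= INR (length l) * b.
Proof.
  induction l as [|x l IH]; intro H; [simpl; lra|]. change (length (x :: l)) with (S (length l)). rewrite S_INR. simpl.
  assert (D x <= b) by (apply H; left; auto).
  assert (sumD D l <= INR (length l) * b) by (apply IH; intros; apply H; right; auto). lra.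
Qed.

Lemma sumD_Gm {G} (D : G -> R) l b : (forall y, In y l -> D y <= b) -> sumD D l <= Gm D b l.
Proof.
  induction l as [|x l IH]; intro H; simpl; [lra|].
  assert (D x <= b) by (apply H; left; auto). rewrite Rmin_left; auto.
  assert (sumD D l <= Gm D b l) by (apply IH; intros; apply H; right; auto). lra.
Qed.

Lemma INR_le_pow2 n : INR n <= 2^n.
Proof.
  induction n; [simpl; lra|]. rewrite S_INR. simpl pow.
  assert (1 <= 2^n) by (apply pow_R1_Rle; lra). lra.
Qed.

Lemma pow2_unbounded x : exists L, x <= 2^L.
Proof.
  destruct (archimed x) as [h _].
  destruct (Z_lt_le_dec (up x) 0) as [z|z].
  - exists O. apply IZR_lt in z. simpl. lra.
  - exists (Z.to_nat (up x)). eapply Rle_trans; [|apply INR_le_pow2].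
    rewrite INR_IZR_INZ, Z2Nat.id; auto. lra.
Qed.

Lemma core {G} (dist : G -> G -> R) (kappa0 alpha0 T : R) (Lambda : G -> Prop) (D : G -> R)
  (n1 nk : G) (k : nat) (gamma : list G) :
  0 < kappa0 <= 1 -> 0 < alpha0 <= 1 -> 8 <= T -> (forall m, Lambda m -> 1 <= D m) ->
  in_Gamma dist alpha0 Lambda T kappa0 D n1 nk k gamma ->
  sumD D gamma <= INR k * (4*T/kappa0)^2 + kappa0/512 * path_norm dist alpha0 gamma + 2 * Dbar D gamma.
Proof.
  intros hk ha hT hD H.
  unfold in_Gamma in H; cbv beta zeta in H.
  destruct H as (hk1 & hlen & _ & _ & hF & _ & hA & _).
  set (M := 4*T/kappa0) in *.
  set (pn := path_norm dist alpha0 gamma).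
  assert (hMk : M * kappa0 = 4*T) by (unfold M; field; lra).
  assert (hM : 4*T <= M) by nra.
  assert (hpn : 0 <= pn) by apply pn_nonneg.
  assert (Hc : forall mu, M <= mu -> INR (cntg D mu gamma) <= 2 + 2*pn/((mu/T)^5)).
  { intros mu hmu. apply (count_bound dist alpha0 D mu _ n1) with (n := length gamma).
    - apply pow_lt. apply Rdiv_lt_0_compat; lra.
    - lia.
    - intros i j Hj Hij Hi Hj'.
      apply (rpow_big _ _ alpha0).
      + apply (Rmult_le_reg_l T); [lra|]. field_simplify; lra.
      + auto.
      + assert (Hm : mu < Rmin (D (nth i gamma n1)) (D (nth j gamma n1))) by (apply Rmin_glb_lt; auto).
        assert (HA := hA i j ltac:(lia) Hij ltac:(lra)).
        apply (Rmult_lt_reg_l T); [lra|]. replace (T * (mu/T)) with mu by (field; lra). lra. }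
  assert (HE : 48*T^5 <= kappa0/512 * M^8).
  { assert (H7 : (4*T)^7 <= M^7) by (apply pow_incr; lra).
    assert (Eq : kappa0/512 * M^8 = 4*T*M^7/512).
    { replace (M^8) with (M * M^7) by ring. rewrite <- hMk. field. }
    rewrite Eq.
    assert (T^3 >= 1) by (assert (1 <= T^3) by (apply pow_R1_Rle; lra); lra).
    assert (HT5 : 0 < T^5) by (apply pow_lt; lra).
    assert (4*T*(4*T)^7 <= 4*T*M^7) by (apply Rmult_le_compat_l; lra).
    replace (4*T*(4*T)^7) with (65536 * (T^3 * T^5)) in H0 by ring.
    nra. }
  destruct gamma as [|x g]; [simpl in hlen; lia|].
  assert (HDx : 1 <= D x) by (apply hD; inversion hF; auto).
  assert (Hall : forall y, In y (x :: g) -> D y <= Dbar D (x :: g)) by (intros; apply Dbar_ge; auto).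
  assert (HDb : 1 <= Dbar D (x :: g)) by (pose proof (Hall x (or_introl eq_refl)); lra).
  assert (hkap : 0 <= kappa0/512 * pn) by (apply Rmult_le_pos; lra).
  rewrite <- hlen.
  destruct (Rle_lt_dec (Dbar D (x :: g)) (M^2)) as [h|h].
  - pose proof (sumD_len D _ _ Hall). pose proof (pos_INR (length (x :: g))).
    assert (INR (length (x :: g)) * Dbar D (x :: g) <= INR (length (x :: g)) * M^2)
      by (apply Rmult_le_compat_l; lra).
    lra.
  - destruct (pow2_unbounded (Dbar D (x :: g) / M^2)) as [L HL].
    assert (HM2 : 0 < M^2) by nra.
    assert (Hinv := inv D (x :: g) pn T M (kappa0/512) hpn ltac:(lra) ltac:(lra) HE Hc L (Dbar D (x :: g))).
    assert (Hb : Dbar D (x :: g) <= M^2 * 2^L).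
    { apply (Rmult_le_compat_l (M^2)) in HL; [|lra]. replace (M^2 * (Dbar D (x :: g) / M^2)) with (Dbar D (x :: g)) in HL by (field; lra). lra. }
    specialize (Hinv ltac:(split; lra)).
    pose proof (sumD_Gm D _ _ Hall).
    assert (0 <= 3*T^5/(Dbar D (x :: g))^4).
    { apply Rle_mult_inv_pos; [assert (0 <= T^5) by (apply pow_le; lra); lra| apply pow_lt; lra]. }
    assert (pn * (kappa0/512 - 3*T^5/(Dbar D (x :: g))^4) <= kappa0/512 * pn).
    { assert (0 <= pn * (3*T^5/(Dbar D (x :: g))^4)) by (apply Rmult_le_pos; lra). nra. }
    lra.
Qed.

Theorem mainTheorem2
  (* the Abelian group (T, +) with its norm |.| *)
  (G : Type) (add : G -> G -> G) (opp : G -> G) (zero : G) (norm : G -> R)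
  (add_assoc : forall a b c, add a (add b c) = add (add a b) c)
  (add_comm : forall a b, add a b = add b a)
  (add_zero : forall a, add a zero = a)
  (add_opp : forall a, add a (opp a) = zero)
  (norm_nonneg : forall m, 0 <= norm m)
  (norm_zero : forall m, norm m = 0 <-> m = zero)
  (norm_triangle : forall m n, norm (add m n) <= norm m + norm n)
  (* parameters *)
  (kappa0 alpha0 T : R)
  (hk : 0 < kappa0 <= 1) (ha : 0 < alpha0 <= 1) (hT : 8 <= T)
  (Lambda : G -> Prop) (w : G -> G -> R) (D : G -> R)
  (hw_nonneg : forall m n, Lambda m -> Lambda n -> 0 <= w m n)
  (hw_diag : forall m, Lambda m -> w m m = 1)
  (hw_decay : forall m n, Lambda m -> Lambda n ->
     w m n <= exp (- kappa0 * rpow (norm (add m (opp n))) alpha0))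
  (hD : forall m, Lambda m -> 1 <= D m)
  (hDG : in_GG (fun m n => norm (add m (opp n))) alpha0 Lambda T kappa0 D)
  (* the trajectory *)
  (n1 nk : G) (k : nat) (gamma : list G)
  (hgamma : in_Gamma (fun m n => norm (add m (opp n))) alpha0 Lambda T kappa0 D
              n1 nk k gamma) :
  let M := 4 * T / kappa0 in
  Wgt (fun m n => norm (add m (opp n))) alpha0 kappa0 D gamma <=
  exp (INR k * M ^ 2
       - kappa0 * (1 - / 2 ^ 9) * path_norm (fun m n => norm (add m (opp n))) alpha0 gamma
       + 2 * Dbar D gamma).
Proof.
  intro M. unfold Wgt. apply exp_le'.
  pose proof (core _ _ _ _ _ _ _ _ _ _ hk ha hT hD hgamma) as H.
  fold M in H.
  replace (/ 2 ^ 9) with (/512) by (simpl; lra).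
  lra.
Qed.
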